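(* Let $d\ge3$, $0<z<1$, $0<\alpha<1/2$, and for $\beta>0$ set $y=y(\beta)=-\log(z)/\beta$. Let $r_1,\dots,r_d$ be independent with distribution $\alpha\delta_{-1}+(1-2\alpha)\delta_0+\alpha\delta_1$, let $\rho_i(\sigma)=\frac{1+\sigma r_i}{2}$ for $\sigma=\pm1$, and \[X_1=\sum_{\tau\in\{\pm1\}}\prod_{h=1}^d\left(1-(1-e^{-\beta})\rho_h(\tau)\right),\qquad X_2=1-(1-e^{-\beta})\sum_{\tau\in\{\pm1\}}\rho_1(\tau)\rho_2(\tau).\] Then \[\lim_{\beta\to\infty}\frac{1}{\beta y}\left(\log\mathbb{E}[X_1^y]-\frac d2\log\mathbb{E}[X_2^y]\right)=F_d(\alpha,z),\] where $F_d(\alpha,z)=-\frac{\log(\zeta\mathcal{A}^d\xi)}{\log z}+\frac{d\log(1-2\alpha^2+2\alpha^2z)}{2\log z}$, $\mathcal{A}=(1-2\alpha)I+2\alpha\sqrt z\,\mathcal{M}$, $I$ is the $(d+1)\times(d+1)$ identity, $\zeta=(1,0,\dots,0)\in\mathbb{R}^{1\times(d+1)}$, $\xi=(1,z^{-1/2},z^{-1},\dots,z^{-d/2})^T$, and $\mathcal{M}$ is the $(d+1)\times(d+1)$ matrix indexed by $0,\dots,d$ with $\mathcal{M}_{0,1}=\mathcal{M}_{d,d-1}=1$, $\mathcal{M}_{i,i-1}=\mathcal{M}_{i,i+1}=1/2$ for $1\le i\le d-1$, and all other entries $0$.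
   Context: $\delta_x$ denotes the point mass at $x$. *)

(* Defs.v *)
From HB Require Import structures.
From mathcomp Require Import all_boot all_order all_algebra.
From mathcomp Require Import all_classical all_reals all_analysis.
Set Implicit Arguments. Unset Strict Implicit. Unset Printing Implicit Defensive.
Import Order.TTheory GRing.Theory Num.Theory.
Import numFieldNormedType.Exports.
Local Open Scope ring_scope.

Section Defs.
Variable R : realType.

Definition rval (k : 'I_3) : R := (val k)%:R - 1.

Definition rweight (alpha : R) (k : 'I_3) : R :=
  if val k == 1%N then 1 - 2 * alpha else alpha.

(* Expectation of f(r_1,...,r_d) for r_1,...,r_d independent with the
   above law: sum over the finite product space with product weights. *)
Definition expect (d : nat) (alpha : R) (f : ('I_d -> R) -> R) : R :=
  \sum_(r : {ffun 'I_d -> 'I_3})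
     (\prod_(h < d) rweight alpha (r h)) * f (fun h => rval (r h)).

Definition rho (ri sigma : R) : R := (1 + sigma * ri) / 2.

Definition X1 (d : nat) (beta : R) (r : 'I_d -> R) : R :=
  \sum_(tau <- [:: -1; 1])
     \prod_(h < d) (1 - (1 - expR (- beta)) * rho (r h) tau).

(* rho_1(tau) rho_2(tau): product over the first two coordinates h = 0,1 *)
Definition X2 (d : nat) (beta : R) (r : 'I_d -> R) : R :=
  1 - (1 - expR (- beta)) *
      \sum_(tau <- [:: -1; 1]) \prod_(h < d | (h < 2)%N) rho (r h) tau.

Definition Mmat (d : nat) : 'M[R]_(d.+1) :=
  \matrix_(i, j)
    if (val i == 0)%N then ((val j == 1)%N)%:R
    else if (val i == d) then ((val j == d.-1)%N)%:R
    else if (val j == (val i).+1) || ((val j).+1 == val i) then 1 / 2 else 0.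

Definition Amat (d : nat) (alpha z : R) : 'M[R]_(d.+1) :=
  (1 - 2 * alpha) *: 1%:M + (2 * alpha * Num.sqrt z) *: Mmat d.

Definition zeta (d : nat) : 'rV[R]_(d.+1) := \row_(j < d.+1) ((val j == 0)%N)%:R.

Definition xi (d : nat) (z : R) : 'cV[R]_(d.+1) :=
  \col_(k < d.+1) powR z (- ((val k)%:R / 2)).

Definition Fd (d : nat) (alpha z : R) : R :=
  - ln ((zeta d *m (Amat d alpha z ^+ d) *m xi d z) ord0 ord0) / ln z
  + d%:R * ln (1 - 2 * alpha ^+ 2 + 2 * alpha ^+ 2 * z) / (2 * ln z).

End Defs.
Arguments expect {R} d alpha f.

(* Main.v *)
Require Import Defs.
From HB Require Import structures.
From mathcomp Require Import all_boot all_order all_algebra.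
From mathcomp Require Import all_classical all_reals all_analysis.
From mathcomp Require Import ring lra zify.
From Stdlib Require Import Lia.
Import Order.TTheory GRing.Theory Num.Theory.
Import numFieldNormedType.Exports.
Local Open Scope ring_scope.
Local Open Scope classical_set_scope.
Set Implicit Arguments. Unset Strict Implicit. Unset Printing Implicit Defensive.

Section Split.
Variables (T : finType) (n : nat).

Definition fext (f : {ffun 'I_n -> T}) (k : T) : {ffun 'I_n.+1 -> T} :=
  [ffun i => if unlift ord_max i is Some j then f j else k].
Definition fres (g : {ffun 'I_n.+1 -> T}) : {ffun 'I_n -> T} :=
  [ffun j => g (widen_ord (leqnSn n) j)].

Lemma widen_lift (j : 'I_n) : widen_ord (leqnSn n) j = lift ord_max j.
Proof. by apply: val_inj; rewrite /= /bump leqNgt ltn_ord. Qed.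

Lemma fext_max f k : fext f k ord_max = k.
Proof. by rewrite ffunE unlift_none. Qed.

Lemma fext_widen f k j : fext f k (widen_ord (leqnSn n) j) = f j.
Proof. by rewrite ffunE widen_lift liftK. Qed.

Lemma sum_fext (V : nmodType) (F : {ffun 'I_n.+1 -> T} -> V) :
  \sum_(g : {ffun 'I_n.+1 -> T}) F g =
  \sum_(f : {ffun 'I_n -> T}) \sum_(k : T) F (fext f k).
Proof.
rewrite pair_bigA /=.
rewrite (reindex (fun p : {ffun 'I_n -> T} * T => fext p.1 p.2)) //=.
exists (fun g => (fres g, g ord_max)).
  move=> [f k] _ /=; congr pair; last by rewrite fext_max.
  by apply/ffunP => j; rewrite ffunE fext_widen.
move=> g _; apply/ffunP => i; rewrite ffunE.
case: unliftP => [j ->|->] /=; last by [].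
by rewrite ffunE widen_lift.
Qed.

Lemma prod_fext (V : comPzSemiRingType) (G : T -> V) f k :
  \prod_(h < n.+1) G (fext f k h) = (\prod_(h < n) G (f h)) * G k.
Proof.
rewrite big_ord_recr /= fext_max; congr (_ * _).
by apply: eq_bigr => h _; rewrite fext_widen.
Qed.

Lemma cnt_fext (P : T -> bool) f k :
  (\sum_(h < n.+1) P (fext f k h) = \sum_(h < n) P (f h) + P k)%N.
Proof.
rewrite big_ord_recr /= fext_max; congr (_ + _)%N.
by apply: eq_bigr => h _; rewrite fext_widen.
Qed.

Lemma sum_ffun0 (V : nmodType) (F : {ffun 'I_0 -> T} -> V) r0 :
  \sum_(g : {ffun 'I_0 -> T}) F g = F r0.
Proof.
rewrite (big_pred1 r0) // => r /=; apply/esym/eqP/ffunP => -[].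
by [].
Qed.
End Split.

Section Comb.
Variables (R : realType) (d : nat) (alpha z : R).

Definition is2 (t : 'I_3) : bool := (val t == 2)%N.
Definition is0 (t : 'I_3) : bool := (val t == 0)%N.
Definition c2 n (r : {ffun 'I_n -> 'I_3}) := (\sum_(h < n) is2 (r h))%N.
Definition c0 n (r : {ffun 'I_n -> 'I_3}) := (\sum_(h < n) is0 (r h))%N.
Definition dn (a b : nat) := ((a - b) + (b - a))%N.
Definition pj (j : nat) := if j is 0 then 1%N else j.-1.
Definition ev (k : nat) : 'rV[R]_(d.+1) := delta_mx 0 (inord k).
Definition W n (r : {ffun 'I_n -> 'I_3}) := \prod_(h < n) rweight alpha (r h).
Local Notation sz := (Num.sqrt z).

Lemma ev_eq (k : nat) (i : 'I_d.+1) : (k <= d)%N -> ev k 0 i = (val i == k)%:R.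
Proof.
move=> kd; rewrite /ev mxE eqxx /=.
by rewrite -(inj_eq val_inj) /= inordK.
Qed.

Lemma eq_inord (k : nat) (i : 'I_d.+1) : (k <= d)%N -> (i == inord k) = (val i == k).
Proof. by move=> kd; rewrite -(inj_eq val_inj) /= inordK. Qed.

Lemma evM j : (j < d)%N -> ev j *m Mmat R d = 2^-1 *: (ev j.+1 + ev (pj j)).
Proof.
move=> jd; apply/rowP => i.
rewrite /ev -rowE !mxE.
have vj : val (inord j : 'I_d.+1) = j by apply: inordK; apply: ltnW.
rewrite {}vj eqxx /= !eq_inord //; last first.
  by case: j jd => //= j jd; apply: ltnW; apply: ltnW.
case: j jd => [|j] jd /=.
  by case: (val i == 1)%N => /=; lra.
rewrite (ltn_eqF jd).
case: (val i =P j.+2) => [->|h1] /=.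
  have -> : (j.+2 == j) = false by apply/eqP; lia.
  by rewrite /=; lra.
rewrite eqSS; case: eqP => _ /=; lra.
Qed.

Lemma evA j : (j < d)%N -> ev j *m Amat d alpha z =
  (1 - 2 * alpha) *: ev j + (alpha * sz) *: (ev j.+1 + ev (pj j)).
Proof.
move=> jd; rewrite /Amat mulmxDr -!scalemxAr mulmx1 evM // scalerA.
congr (_ + _ *: _); rewrite mulrAC -[RHS]mulr1 -[X in _ = _ * X](@divff _ 2) ?pnatr_eq0 //; ring.
Qed.

Lemma dn_step a b : ev (dn a.+1 b) + ev (dn a b.+1) = ev (dn a b).+1 + ev (pj (dn a b)).
Proof.
rewrite /dn; case: (ltngtP a b) => h.
- have [k ->] : exists k, b = (a + k.+1)%N by exists (b - a).-1; lia.
  have -> : (a.+1 - (a + k.+1) + (a + k.+1 - a.+1) = k)%N by lia.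
  have -> : (a - (a + k.+1).+1 + ((a + k.+1).+1 - a) = k.+2)%N by lia.
  have -> : (a - (a + k.+1) + (a + k.+1 - a) = k.+1)%N by lia.
  by rewrite /= addrC.
- have [k ->] : exists k, a = (b + k.+1)%N by exists (a - b).-1; lia.
  have -> : ((b + k.+1).+1 - b + (b - (b + k.+1).+1) = k.+2)%N by lia.
  have -> : (b + k.+1 - b.+1 + (b.+1 - (b + k.+1)) = k)%N by lia.
  have -> : (b + k.+1 - b + (b - (b + k.+1)) = k.+1)%N by lia.
  by [].
- subst b.
  have -> : (a.+1 - a + (a - a.+1) = 1)%N by lia.
  have -> : (a - a.+1 + (a.+1 - a) = 1)%N by lia.
  by rewrite subnn.
Qed.

Lemma c_le n (r : {ffun 'I_n -> 'I_3}) : (c2 r + c0 r <= n)%N.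
Proof.
rewrite /c2 /c0 -big_split /=.
rewrite -[X in (_ <= X)%N](card_ord n) -sum1_card.
apply: leq_sum => h _; rewrite /is2 /is0; case: (r h) => -[|[|[|k]]] //.
Qed.

Definition Ssum n := \sum_(r : {ffun 'I_n -> 'I_3})
   W r *: (sz ^+ (c2 r + c0 r) *: ev (dn (c2 r) (c0 r))).

Lemma claim n : (n <= d)%N -> Ssum n = ev 0 *m Amat d alpha z ^+ n.
Proof.
elim: n => [|n IH] Hn.
  rewrite /Ssum (sum_ffun0 _ [ffun => ord0]) /W /c2 /c0 !big_ord0 expr0 mulmx1.
  by rewrite !scale1r.
rewrite exprSr -mulmxE mulmxA -IH; last by apply: ltnW.
rewrite /Ssum sum_fext mulmx_suml; apply: eq_bigr => r _.
rewrite /W /c2 /c0.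
under eq_bigr => k _ do rewrite prod_fext (cnt_fext is2) (cnt_fext is0).
rewrite !big_ord_recl big_ord0 /= addr0.
have cl := c_le r; rewrite /c2 /c0 in cl.
move: cl.
set a := (\sum_(h < n) is2 (r h))%N.
set b := (\sum_(h < n) is0 (r h))%N.
set P := \prod_(h < n) rweight alpha (r h).
move=> cl.
rewrite -!scalemxAl evA; last by rewrite /dn; lia.
rewrite !addn0 !addn1 -dn_step.
have -> : (a + b.+1 = (a + b).+1)%N by lia.
rewrite addSn.
apply/rowP => i; rewrite !mxE exprS.
rewrite /rweight /=.
ring.
Qed.
End Comb.

Section Qval.
Variables (R : realType) (d : nat) (alpha z : R).
Hypothesis z0 : 0 < z.

Lemma powR_exp (x : R) : powR z x = expR (x * ln z).
Proof. by rewrite /powR gt_eqF. Qed.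

Lemma zeta_ev : zeta R d = ev R d 0.
Proof. by apply/rowP => i; rewrite ev_eq // mxE. Qed.

Lemma half2 (x : R) : x * 2 / 2 = x.
Proof. by rewrite -mulrA mulfV ?mulr1 // pnatr_eq0. Qed.

Lemma wt_aux (x y L : R) : (x + y) * (2^-1 * L) + - ((y - x) / 2) * L = x * L.
Proof.
transitivity ((x * 2 / 2) * L); first by ring.
by rewrite half2.
Qed.

Lemma weight_term (a b : nat) :
  Num.sqrt z ^+ (a + b) * powR z (- ((dn a b)%:R / 2)) = z ^+ minn a b.
Proof.
rewrite -powR12_sqrt ?ltW // powR_exp -expRM_natl powR_exp -expRD.
rewrite -[z in RHS](lnK z0) -expRM_natl; congr expR.
rewrite /dn /minn; case: ltnP => h.
  have -> : (a - b = 0)%N by apply/eqP; rewrite subn_eq0 ltnW.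
  by rewrite add0n natrB ?(ltnW h) // natrD wt_aux.
have -> : (b - a = 0)%N by apply/eqP; rewrite subn_eq0.
by rewrite addn0 natrB // addnC natrD wt_aux.
Qed.

Lemma Qval : (zeta R d *m (Amat d alpha z ^+ d) *m xi d z) ord0 ord0 =
  \sum_(r : {ffun 'I_d -> 'I_3}) W alpha r * z ^+ minn (c2 r) (c0 r).
Proof.
rewrite zeta_ev -claim // /Ssum mulmx_suml summxE; apply: eq_bigr => r _.
rewrite -!scalemxAl !mxE; congr (_ * _).
rewrite -weight_term; congr (_ * _).
have hd : (dn (c2 r) (c0 r) <= d)%N by have := c_le r; rewrite /dn; move: (c2 r) (c0 r) => a b; lia.
rewrite /ev (bigD1 (inord (dn (c2 r) (c0 r)))) //= big1 ?addr0.
  by rewrite !mxE !eqxx mul1r /= (@inordK d).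
by move=> j /negbTE hj; rewrite !mxE hj andbF mul0r.
Qed.
End Qval.

Section Pval.
Variables (R : realType) (alpha z : R).

Lemma sumW_G m (G : 'I_m -> 'I_3 -> R) :
  \sum_(r : {ffun 'I_m -> 'I_3}) W alpha r * \prod_(h < m) G h (r h) =
  \prod_(h < m) \sum_(k < 3) rweight alpha k * G h k.
Proof.
rewrite bigA_distr_bigA; apply: eq_bigr => r _.
by rewrite /W -big_split.
Qed.

Lemma sum_rweight : \sum_(k < 3) rweight alpha k = 1.
Proof. rewrite !big_ord_recl big_ord0 /rweight /=; lra. Qed.

Definition o1 n : 'I_n.+3 := lift ord0 ord0.
Definition m2 (k0 k1 : 'I_3) : nat := ((is0 k0 && is0 k1) || (is2 k0 && is2 k1)).

Lemma sum_pair n (k : 'I_3) : (val k != 1)%N ->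
  \sum_(r : {ffun 'I_n.+3 -> 'I_3}) W alpha r * ((r ord0 == k) && (r (o1 n) == k))%:R
  = alpha ^+ 2.
Proof.
move=> k1.
have := @sumW_G n.+3 (fun h j => if (val h < 2)%N then (j == k)%:R else 1).
rewrite big_ord_recl big_ord_recl /=.
have hrest : \prod_(i < n.+1) \sum_(k0 < 3) rweight alpha k0 * (1 : R) = 1.
  by apply: big1 => i _; under eq_bigr do rewrite mulr1; exact: sum_rweight.
rewrite hrest mulr1.
have hk : \sum_(j < 3) rweight alpha j * (j == k)%:R = alpha.
  rewrite (bigD1 k) //= big1 ?addr0; first by rewrite eqxx mulr1 /rweight (negbTE k1).
  by move=> j /negbTE ->; rewrite mulr0.
rewrite hk expr2 => <-; apply: eq_bigr => r _; congr (_ * _).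
rewrite big_ord_recl big_ord_recl /= big1 ?mulr1; last first.
  by move=> i _; rewrite /bump.
by case: (r ord0 == k); case: (r (o1 n) == k); rewrite /= ?mulr1 ?mulr0 ?mul0r.
Qed.

Lemma Pval n : \sum_(r : {ffun 'I_n.+3 -> 'I_3}) W alpha r * z ^+ m2 (r ord0) (r (o1 n))
  = 1 - 2 * alpha ^+ 2 + 2 * alpha ^+ 2 * z.
Proof.
have e : forall k0 k1 : 'I_3, z ^+ m2 k0 k1 = 1 + (z - 1) *
   (((k0 == (0 : 'I_3)) && (k1 == (0 : 'I_3)))%:R + ((k0 == (2 : 'I_3)) && (k1 == (2 : 'I_3)))%:R).
  move=> k0 k1; case: k0 => -[|[|[|k0]]] // H0; case: k1 => -[|[|[|k1]]] // H1;
  rewrite /m2 /is0 /is2 /=; ring.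
under eq_bigr do rewrite e mulrDr mulr1 mulrDr mulrDr.
rewrite !big_split /=.
have sW : \sum_(r : {ffun 'I_n.+3 -> 'I_3}) W alpha r = 1.
  have := @sumW_G n.+3 (fun _ _ => (1 : R)).
  under eq_bigr do rewrite big1 ?mulr1 //.
  move=> ->; apply: big1 => h _.
  under eq_bigr do rewrite mulr1.
  by rewrite sum_rweight.
rewrite sW.
under eq_bigr do rewrite mulrCA.
rewrite -mulr_sumr sum_pair //.
under eq_bigr do rewrite mulrCA.
rewrite -mulr_sumr sum_pair //.
ring.
Qed.
End Pval.

Section Bounds.
Variable R : realType.

Lemma prodr_cst n (c : R) : \prod_(h < n) c = c ^+ n.
Proof.
elim: n => [|n IH]; first by rewrite big_ord0 expr0.
by rewrite big_ord_recr IH exprSr.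
Qed.

Lemma fac1 (k : 'I_3) (w : R) : 0 < w <= 1 ->
  0 <= w ^+ is2 k / 2 <= 1 - (1 - w) * rho (rval R k) 1 /\
  1 - (1 - w) * rho (rval R k) 1 <= w ^+ is2 k.
Proof.
move=> /andP[w0 w1].
case: k => -[|[|[|k]]] // Hk; rewrite /rho /rval /is2 /= ?expr0 ?expr1;
  split; try (apply/andP; split); lra.
Qed.

Lemma facm1 (k : 'I_3) (w : R) : 0 < w <= 1 ->
  0 <= w ^+ is0 k / 2 <= 1 - (1 - w) * rho (rval R k) (-1) /\
  1 - (1 - w) * rho (rval R k) (-1) <= w ^+ is0 k.
Proof.
move=> /andP[w0 w1].
case: k => -[|[|[|k]]] // Hk; rewrite /rho /rval /is0 /= ?expr0 ?expr1;
  split; try (apply/andP; split); lra.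
Qed.

Lemma prod_bounds n (P : 'I_3 -> bool) (g : 'I_3 -> R) (w : R) (r : {ffun 'I_n -> 'I_3}) :
  0 < w ->
  (forall k, 0 <= w ^+ P k / 2 <= g k /\ g k <= w ^+ P k) ->
  w ^+ (\sum_(h < n) P (r h))%N / 2 ^+ n <= \prod_(h < n) g (r h) <=
  w ^+ (\sum_(h < n) P (r h))%N.
Proof.
move=> w0 hg; apply/andP; split.
  have e : \prod_(h < n) (w ^+ P (r h) / 2) = w ^+ (\sum_(h < n) P (r h))%N / 2 ^+ n.
    by rewrite big_split /= prodrXr prodr_cst exprVn.
  rewrite -e; apply: ler_prod => h _; by have [] := hg (r h).
rewrite -prodrXr; apply: ler_prod => h _; have [/andP[h0 h1] h2] := hg (r h).
by rewrite (le_trans h0 h1) h2.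
Qed.
End Bounds.

Section XBounds.
Variable R : realType.

Lemma w_prop (b : R) : 0 < b -> 0 < expR (- b) <= 1.
Proof. by move=> b0; rewrite expR_gt0 expR_le1 oppr_le0 ltW. Qed.

Lemma X1_bounds n (r : {ffun 'I_n -> 'I_3}) (b : R) : 0 < b ->
  expR (- b) ^+ minn (c2 r) (c0 r) / (2 * 2 ^+ n) <= X1 b (fun h => rval R (r h))
  <= (2 * 2 ^+ n) * expR (- b) ^+ minn (c2 r) (c0 r).
Proof.
move=> b0; have /andP[w0 w1] := w_prop b0.
rewrite /X1; move: (expR (- b)) w0 w1 => w w0 w1.
rewrite big_cons big_cons big_nil addr0.
have /andP[l0 u0] := prod_bounds (g := fun k => 1 - (1 - w) * rho (rval R k) (-1)) r w0
   (fun k => facm1 k (introT andP (conj w0 w1))).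
have /andP[l2 u2] := prod_bounds (g := fun k => 1 - (1 - w) * rho (rval R k) 1) r w0
   (fun k => fac1 k (introT andP (conj w0 w1))).
rewrite -/(c0 r) in l0 u0; rewrite -/(c2 r) in l2 u2.
set T0 := \prod_(h < n) _ in l0 u0 *; set T2 := \prod_(h < n) _ in l2 u2 *.
set p := 2 ^+ n : R in l0 l2 *.
have p1 : 1 <= p by apply: exprn_ege1; rewrite ler1n.
clearbody T0 T2 p.
have p0 : 0 < p by lra.
have hA : 0 <= w ^+ c0 r by apply: exprn_ge0; lra.
have hB : 0 <= w ^+ c2 r by apply: exprn_ge0; lra.
have T00 : 0 <= T0 by apply: le_trans l0; apply: divr_ge0 => //; lra.
have T20 : 0 <= T2 by apply: le_trans l2; apply: divr_ge0 => //; lra.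
have hm0 : w ^+ c0 r <= w ^+ minn (c2 r) (c0 r) by apply: ler_wiXn2l => //; [lra | exact: geq_minr].
have hm2 : w ^+ c2 r <= w ^+ minn (c2 r) (c0 r) by apply: ler_wiXn2l => //; [lra | exact: geq_minl].
have hm : 0 <= w ^+ minn (c2 r) (c0 r) by apply: exprn_ge0; lra.
have e : forall x : R, x / (2 * p) = (x / p) / 2 by move=> x; rewrite invfM; ring.
apply/andP; split; last first.
  have : T0 + T2 <= 2 * w ^+ minn (c2 r) (c0 r) by lra.
  move=> h; apply: le_trans h _; nra.
rewrite e; rewrite /minn; case: ltnP => _.
  have : 0 <= w ^+ c2 r / p by apply: divr_ge0 => //; lra.
  lra.
have : 0 <= w ^+ c0 r / p by apply: divr_ge0 => //; lra.
lra.
Qed.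

Lemma prod2 n (F : 'I_n.+3 -> R) : \prod_(h < n.+3 | (h < 2)%N) F h = F ord0 * F (o1 n).
Proof.
rewrite big_mkcond big_ord_recl big_ord_recl /= big1 ?mulr1 //.
Qed.

Lemma X2_bounds n (r : {ffun 'I_n.+3 -> 'I_3}) (b : R) : 0 < b ->
  expR (- b) ^+ m2 (r ord0) (r (o1 n)) / 2 <= X2 b (fun h => rval R (r h))
  <= 2 * expR (- b) ^+ m2 (r ord0) (r (o1 n)).
Proof.
move=> b0; have /andP[w0 w1] := w_prop b0.
rewrite /X2; move: (expR (- b)) w0 w1 => w w0 w1.
rewrite big_cons big_cons big_nil addr0 !prod2.
move: (r ord0) (r (o1 n)) => k0 k1.
case: k0 => -[|[|[|k0]]] // H0; case: k1 => -[|[|[|k1]]] // H1;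
  rewrite /m2 /is0 /is2 /rho /rval /= ?expr0 ?expr1; apply/andP; split; lra.
Qed.
End XBounds.

Section Lim.
Variable R : realType.

Lemma invx_cvg0 : (fun b : R => b^-1) @ +oo --> (0 : R).
Proof.
apply/gtr0_cvgV0; first by apply: nbhs_pinfty_gt; rewrite num_real.
exact: cvg_id.
Qed.

Lemma lim_powR (z C : R) (m : nat) (X : R -> R) : 0 < z < 1 -> 1 <= C ->
  (forall b, 0 < b -> expR (- b) ^+ m / C <= X b <= C * expR (- b) ^+ m) ->
  powR (X b) (- ln z / b) @[b --> +oo] --> z ^+ m.
Proof.
move=> /andP[z0 z1] C1 HX.
have L0 : 0 < - ln z by rewrite oppr_gt0 ln_lt0 ?z0 ?z1.
have lC : 0 <= ln C by rewrite -ln1 ler_ln ?posrE //; lra.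
have C0 : 0 < C by lra.
have key : (- ln z / b) * ln (X b) @[b --> +oo] --> m%:R * ln z.
  apply: (squeeze_cvgr (f := fun b => m%:R * ln z - (- ln z) * ln C * b^-1)
     (h := fun b => m%:R * ln z + (- ln z) * ln C * b^-1)).
  - near=> b.
    have b0 : 0 < b by near: b; apply: nbhs_pinfty_gt; rewrite num_real.
    have [Xl Xu] := andP (HX b b0).
    have w0 : 0 < expR (- b) ^+ m := exprn_gt0 _ (expR_gt0 _).
    have X0 : 0 < X b by apply: lt_le_trans Xl; apply: divr_gt0.
    have lnw : ln (expR (- b) ^+ m) = m%:R * (- b) by rewrite lnXn ?expR_gt0 // expRK mulr_natl.
    have lo : m%:R * (- b) - ln C <= ln (X b).
      have := Xl; rewrite -ler_ln ?posrE //; last by apply: divr_gt0.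
      by rewrite lnM ?posrE ?invr_gt0 // lnV ?posrE // lnw.
    have up : ln (X b) <= ln C + m%:R * (- b).
      by have := Xu; rewrite -ler_ln ?posrE ?mulr_gt0 // lnM ?posrE // lnw.
    have y0 : 0 <= - ln z / b by apply: divr_ge0; lra.
    have bn : b != 0 by rewrite gt_eqF.
    have aux : forall L u : R, L / b * (u * - b) = - (L * u) * (b / b) by move=> L u; ring.
    have e1 : - ln z / b * (m%:R * (- b) - ln C) = m%:R * ln z - - ln z * ln C * b^-1.
      rewrite mulrBr; congr (_ - _); last by ring.
      by rewrite aux divff // mulr1; ring.
    have e2 : - ln z / b * (ln C + m%:R * (- b)) = m%:R * ln z + - ln z * ln C * b^-1.
      rewrite mulrDr addrC; congr (_ + _); last by ring.
      by rewrite aux divff // mulr1; ring.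
    rewrite -e1 -e2; apply/andP; split; apply: ler_wpM2l => //.
  - rewrite -[X in _ --> X](subr0 (m%:R * ln z)).
    apply: cvgB; first exact: cvg_cst.
    rewrite -[X in _ --> X](mulr0 (- ln z * ln C)).
    apply: cvgM; [exact: cvg_cst | exact: invx_cvg0].
  - rewrite -[X in _ --> X](addr0 (m%:R * ln z)).
    apply: cvgD; first exact: cvg_cst.
    rewrite -[X in _ --> X](mulr0 (- ln z * ln C)).
    apply: cvgM; [exact: cvg_cst | exact: invx_cvg0].
have -> : z ^+ m = expR (m%:R * ln z) by rewrite expRM_natl lnK.
apply: cvg_trans; first apply: near_eq_cvg.
  near=> b.
  have b0 : 0 < b by near: b; apply: nbhs_pinfty_gt; rewrite num_real.
  have [Xl _] := andP (HX b b0).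
  have X0 : 0 < X b.
    by apply: lt_le_trans Xl; apply: divr_gt0 => //; apply: exprn_gt0; apply: expR_gt0.
  by rewrite /powR gt_eqF.
first [ exact: (continuous_cvg _ (continuous_expR _) key) | (apply: (cvg_comp _ _ key); exact: continuous_expR) ].
Unshelve. all: by end_near.
Qed.
End Lim.

Lemma expect_cvg (R : realType) n (alpha : R) (f : R -> ('I_n -> R) -> R)
  (l : {ffun 'I_n -> 'I_3} -> R) :
  (forall r : {ffun 'I_n -> 'I_3}, f b (fun h => rval R (r h)) @[b --> +oo] --> l r) ->
  expect n alpha (f b) @[b --> +oo] --> \sum_(r : {ffun 'I_n -> 'I_3}) W alpha r * l r.
Proof.
move=> hf; rewrite /expect.
have gen : forall s : seq {ffun 'I_n -> 'I_3},
  \sum_(r <- s) (\prod_(h < n) rweight alpha (r h)) * f b (fun h => rval R (r h))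
    @[b --> +oo] --> \sum_(r <- s) W alpha r * l r.
  elim => [|i s IH].
    rewrite big_nil; under eq_cvg do rewrite big_nil; exact: cvg_cst.
  rewrite big_cons; under eq_cvg do rewrite big_cons.
  apply: cvgD => //; apply: cvgM => //; exact: cvg_cst.
exact: gen.
Qed.

Lemma sumW1 (R : realType) (alpha : R) m :
  \sum_(r : {ffun 'I_m -> 'I_3}) W alpha r = 1.
Proof.
have := @sumW_G R alpha m (fun _ _ => (1 : R)).
under eq_bigr do rewrite big1 ?mulr1 //.
move=> ->; apply: big1 => h _.
under eq_bigr do rewrite mulr1.
by rewrite sum_rweight.
Qed.

Unset Implicit Arguments.
Set Strict Implicit.

Theorem proposition2p10 (R : realType) (d : nat) (alpha z : R) :
  (3 <= d)%N -> 0 < z < 1 -> 0 < alpha < 1 / 2 ->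
  (let y := - ln z / beta in
     (beta * y)^-1 *
       (ln (expect d alpha (fun r => powR (X1 beta r) y))
        - d%:R / 2 * ln (expect d alpha (fun r => powR (X2 beta r) y))))
    @[beta --> +oo] --> Fd d alpha z.
Proof.
move=> d3 zz /andP[a0 a1]; have /andP[z0 z1] := zz.
case: d d3 => [|[|[|n]]] // _.
have Lz : ln z < 0 by rewrite ln_lt0 ?z0.
have Lz0 : ln z != 0 by rewrite lt_eqF.
set Q := \sum_(r : {ffun 'I_n.+3 -> 'I_3}) W alpha r * z ^+ minn (c2 r) (c0 r).
set P := \sum_(r : {ffun 'I_n.+3 -> 'I_3}) W alpha r * z ^+ m2 (r ord0) (r (o1 n)).
have E1 : expect n.+3 alpha (fun r => powR (X1 b r) (- ln z / b)) @[b --> +oo] --> Q.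
  apply: expect_cvg => r.
  apply: (lim_powR (C := 2 * 2 ^+ n.+3)) => //.
    have : 1 <= (2 : R) ^+ n.+3 by apply: exprn_ege1; rewrite ler1n.
    lra.
  by move=> b b0; apply: X1_bounds.
have E2 : expect n.+3 alpha (fun r => powR (X2 b r) (- ln z / b)) @[b --> +oo] --> P.
  apply: expect_cvg => r.
  apply: (lim_powR (C := 2)) => //; first lra.
  by move=> b b0; apply: X2_bounds.
have Wge0 : forall m (r : {ffun 'I_m -> 'I_3}), 0 <= W alpha r.
  move=> m r; apply: prodr_ge0 => h _; rewrite /rweight; case: ifP => _; lra.
have P0 : 0 < P.
  rewrite /P Pval.
  have : alpha ^+ 2 < 1 / 4 by rewrite expr2; nra.
  have : 0 <= alpha ^+ 2 * z by apply: mulr_ge0; [apply: exprn_ge0; lra | lra].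
  lra.
have Q0 : 0 < Q.
  apply: (@lt_le_trans _ _ (\sum_(r : {ffun 'I_n.+3 -> 'I_3}) W alpha r * z ^+ n.+3)).
    by rewrite -mulr_suml sumW1 mul1r; apply: exprn_gt0.
  apply: ler_sum => r _; apply: ler_wpM2l => //.
  apply: ler_wiXn2l; [lra | lra |].
  have := c_le r; rewrite /minn; case: ltnP => _; lia.
have Fe : Fd n.+3 alpha z = (- ln z)^-1 * (ln Q - n.+3%:R / 2 * ln P).
  rewrite /Fd Qval // -/Q.
  rewrite /P Pval.
  rewrite invrN invfM; ring.
rewrite Fe.
have H : (fun b => (- ln z)^-1 *
     (ln (expect n.+3 alpha (fun r => powR (X1 b r) (- ln z / b)))
      - n.+3%:R / 2 * ln (expect n.+3 alpha (fun r => powR (X2 b r) (- ln z / b)))))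
   @ +oo --> (- ln z)^-1 * (ln Q - n.+3%:R / 2 * ln P).
  apply: cvgM; first exact: cvg_cst.
  apply: cvgB.
    exact: (continuous_cvg _ (continuous_ln Q0) E1).
  apply: cvgM; first exact: cvg_cst.
  exact: (continuous_cvg _ (continuous_ln P0) E2).
apply: (cvg_trans _ H); apply: near_eq_cvg.
near=> b.
have b0 : 0 < b by near: b; apply: nbhs_pinfty_gt; rewrite num_real.
rewrite /=.
have -> : b * (- ln z / b) = - ln z by rewrite mulrCA divff ?gt_eqF // mulr1.
by [].
Unshelve. all: by end_near.
Qed.
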